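(* Let $m\geq1$, let $p_{1j},p_{2j}\in\mathbb{R}$, $w_{j}>0$, $d_{j}>0$, $h_{j}\in\mathbb{R}$ for $j=1,\ldots,m$, and let $f_{1}\leq g_{1}$, $f_{2}\leq g_{2}$, $a\leq b$ be reals. Consider the problem of minimizing over $(x_{1},x_{2})^{T}\in\mathbb{R}^{2}$ $$\max_{1\leq j\leq m}\big(w_{j}(|x_{1}-p_{1j}|+|x_{2}-p_{2j}|)+h_{j}\big)$$ subject to $|x_{1}-p_{1j}|+|x_{2}-p_{2j}|\leq d_{j}$ ($j=1,\ldots,m$), $f_{1}-x_{2}\leq x_{1}\leq g_{1}-x_{2}$, $f_{2}+x_{1}\leq x_{2}\leq g_{2}+x_{1}$, and $a\leq x_{1}\leq b$. Let $o_{1j}=p_{1j}+p_{2j}$ and $o_{2j}=p_{2j}-p_{1j}$ for $j=1,\ldots,m$, and let $b_{11}^{\ast}=b_{22}^{\ast}=0$, $b_{12}^{\ast}=2a$, $b_{21}^{\ast}=-2b$. Suppose that $$b_{ik}^{\ast}+\max_{1\leq l\leq m}\max\{o_{kl}-d_{l},f_{k}\}\leq\min_{1\leq j\leq m}\min\{o_{ij}+d_{j},g_{i}\},\qquad i,k=1,2.$$ Then the minimum value of the problem is $$\theta=\max_{1\leq j,l\leq m}\max\Bigg\{\frac{w_{l}h_{j}}{w_{j}+w_{l}}+\frac{w_{j}h_{l}}{w_{j}+w_{l}}+\frac{w_{j}w_{l}}{w_{j}+w_{l}}\max_{1\leq i,k\leq2}(b_{ik}^{\ast}-o_{ij}+o_{kl}),$$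 $$h_{j}+w_{j}\max_{1\leq i,k\leq2}\big(b_{ik}^{\ast}-o_{ij}+\max\{o_{kl}-d_{l},f_{k}\}\big),\ h_{l}+w_{l}\max_{1\leq i,k\leq2}\big(b_{ik}^{\ast}-\min\{d_{j}+o_{ij},g_{i}\}+o_{kl}\big)\Bigg\},$$ and all solution vectors $\bm{x}=(x_{1},x_{2})^{T}$ have entries $x_{1}=(y_{1}-y_{2})/2$, $x_{2}=(y_{1}+y_{2})/2$, where $y_{i}=\max\{b_{i1}^{\ast}+u_{1},b_{i2}^{\ast}+u_{2}\}$ for $i=1,2$ and the parameter vector $\bm{u}=(u_{1},u_{2})^{T}$ satisfies, for $k=1,2$, $$\max_{1\leq j\leq m}\max\left\{\frac{h_{j}-\theta}{w_{j}}+o_{kj},\ -d_{j}+o_{kj},\ f_{k}\right\}\leq u_{k}\leq\min_{1\leq i\leq2}\min_{1\leq j\leq m}\left(\min\left\{\frac{\theta-h_{j}}{w_{j}}+o_{ij},\ d_{j}+o_{ij},\ g_{i}\right\}-b_{ik}^{\ast}\right).$$ *)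

(* Defs.v *)
From mathcomp Require Import all_boot all_order all_algebra.
Set Implicit Arguments. Unset Strict Implicit. Unset Printing Implicit Defensive.
Import Order.TTheory GRing.Theory Num.Theory.
Local Open Scope ring_scope.

Section Defs.
Variable R : realFieldType.

(* maximum / minimum of F 0, ..., F (m-1)  (meaningful for m >= 1;
   indices j = 1..m of the paper are shifted to 0..m-1) *)
Definition fmax (m : nat) (F : nat -> R) : R :=
  foldr Num.max (F 0%N) [seq F j | j <- iota 0 m].
Definition fmin (m : nat) (F : nat -> R) : R :=
  foldr Num.min (F 0%N) [seq F j | j <- iota 0 m].

Definition max12 (F : nat -> nat -> R) : R :=
  Num.max (Num.max (F 1%N 1%N) (F 1%N 2%N)) (Num.max (F 2%N 1%N) (F 2%N 2%N)).
Definition min12 (F : nat -> R) : R := Num.min (F 1%N) (F 2%N).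

Definition sel2 (z1 z2 : R) (i : nat) : R := if i == 1%N then z1 else z2.

Definition bstar (a b : R) (i k : nat) : R :=
  match i, k with
  | 1%N, 2%N => 2 * a
  | 2%N, 1%N => - (2 * b)
  | _, _ => 0
  end.

Definition ocoord (p1 p2 : nat -> R) (k j : nat) : R :=
  if k == 1%N then p1 j + p2 j else p2 j - p1 j.

Definition rdist (p1 p2 : nat -> R) (j : nat) (x1 x2 : R) : R :=
  `|x1 - p1 j| + `|x2 - p2 j|.

Definition objective (m : nat) (p1 p2 w h : nat -> R) (x1 x2 : R) : R :=
  fmax m (fun j => w j * rdist p1 p2 j x1 x2 + h j).

Definition feasible (m : nat) (p1 p2 d : nat -> R) (f1 g1 f2 g2 a b : R)
  (x1 x2 : R) : Prop :=
  [/\ (forall j, (j < m)%N -> rdist p1 p2 j x1 x2 <= d j),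
      f1 - x2 <= x1 <= g1 - x2,
      f2 + x1 <= x2 <= g2 + x1 &
      a <= x1 <= b].

Definition theta (m : nat) (p1 p2 w d h : nat -> R) (f1 g1 f2 g2 a b : R) : R :=
  let o := ocoord p1 p2 in
  let f := sel2 f1 f2 in
  let g := sel2 g1 g2 in
  let bs := bstar a b in
  fmax m (fun j => fmax m (fun l =>
    Num.max
      (Num.max
        (w l * h j / (w j + w l) + w j * h l / (w j + w l)
         + w j * w l / (w j + w l) * max12 (fun i k => bs i k - o i j + o k l))
        (h j + w j * max12 (fun i k => bs i k - o i j + Num.max (o k l - d l) (f k))))
      (h l + w l * max12 (fun i k => bs i k - Num.min (d j + o i j) (g i) + o k l)))).

Definition yvec (a b u1 u2 : R) (i : nat) : R :=
  Num.max (bstar a b i 1%N + u1) (bstar a b i 2%N + u2).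

End Defs.

(* Main.v *)
Require Import Defs.
From mathcomp Require Import all_boot all_order all_algebra.
From mathcomp Require Import ring lra.
Import Order.TTheory GRing.Theory Num.Theory.
Local Open Scope ring_scope.

Lemma foldr_max_le (R : realFieldType) (F : nat -> R) (c x0 : R) (s : seq nat) :
  (foldr Num.max x0 [seq F j | j <- s] <= c) <-> (x0 <= c /\ forall j, j \in s -> F j <= c).
Proof.
elim: s => [|y s IH] /=; first by split=> [h|[] //]; split.
rewrite ge_max; split.
  move=> /andP[hy /IH [h0 hs]]; split=> // j; rewrite inE => /orP[/eqP->//|]; exact: hs.
move=> [h0 hs]; apply/andP; split; first by apply: hs; rewrite inE eqxx.
apply/IH; split=> // j js; by apply: hs; rewrite inE js orbT.
Qed.

Lemma foldr_min_ge (R : realFieldType) (F : nat -> R) (c x0 : R) (s : seq nat) :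
  (c <= foldr Num.min x0 [seq F j | j <- s]) <-> (c <= x0 /\ forall j, j \in s -> c <= F j).
Proof.
elim: s => [|y s IH] /=; first by split=> [h|[] //]; split.
rewrite le_min; split.
  move=> /andP[hy /IH [h0 hs]]; split=> // j; rewrite inE => /orP[/eqP->//|]; exact: hs.
move=> [h0 hs]; apply/andP; split; first by apply: hs; rewrite inE eqxx.
apply/IH; split=> // j js; by apply: hs; rewrite inE js orbT.
Qed.

Lemma fmax_le (R : realFieldType) (m : nat) (F : nat -> R) (c : R) : (0 < m)%N ->
  (fmax m F <= c) <-> (forall j, (j < m)%N -> F j <= c).
Proof.
move=> hm; rewrite /fmax foldr_max_le; split.
  by move=> [_ h] j hj; apply: h; rewrite mem_iota.
move=> h; split; first exact: h.
by move=> j; rewrite mem_iota => /andP[_ hj]; apply: h.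
Qed.

Lemma fmin_ge (R : realFieldType) (m : nat) (F : nat -> R) (c : R) : (0 < m)%N ->
  (c <= fmin m F) <-> (forall j, (j < m)%N -> c <= F j).
Proof.
move=> hm; rewrite /fmin foldr_min_ge; split.
  by move=> [_ h] j hj; apply: h; rewrite mem_iota.
move=> h; split; first exact: h.
by move=> j; rewrite mem_iota => /andP[_ hj]; apply: h.
Qed.

Lemma fmax_ge (R : realFieldType) (m : nat) (F : nat -> R) j : (j < m)%N -> F j <= fmax m F.
Proof. move=> hj; have hm : (0 < m)%N by apply: leq_ltn_trans hj. by move: (le_refl (fmax m F)) => /(@fmax_le R m F _ hm); apply. Qed.

Lemma fmin_le (R : realFieldType) (m : nat) (F : nat -> R) j : (j < m)%N -> fmin m F <= F j.
Proof. move=> hj; have hm : (0 < m)%N by apply: leq_ltn_trans hj. by move: (le_refl (fmin m F)) => /(@fmin_ge R m F _ hm); apply. Qed.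

Definition I12 (i : nat) := i \in [:: 1%N; 2%N].

Lemma max12_le (R : realFieldType) (F : nat -> nat -> R) c :
  (max12 F <= c) <-> (forall i k, I12 i -> I12 k -> F i k <= c).
Proof.
rewrite /max12 !ge_max; split.
  move=> /andP[/andP[h1 h2] /andP[h3 h4]] i k; rewrite /I12 !inE.
  by move=> /orP[]/eqP-> /orP[]/eqP->.
by move=> h; rewrite !h.
Qed.

Lemma arith_pM (R : realFieldType) (c A X t : R) : 0 < c ->
  (A + c * X <= t) = (X <= (t - A) / c).
Proof. by move=> hc; rewrite ler_pdivlMr // -lerBrDl mulrC. Qed.

Lemma arith1 (R : realFieldType) (wj wl hj hl t s : R) : 0 < wj -> 0 < wl ->
  (s + (hl - t)/wl <= (t - hj)/wj) =
  (wl*hj/(wj+wl) + wj*hl/(wj+wl) + wj*wl/(wj+wl)*s <= t).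
Proof.
move=> hj0 hl0.
have hS : 0 < wj + wl by apply: addr_gt0.
have hP : 0 < wj * wl by apply: mulr_gt0.
have -> : wl*hj/(wj+wl) + wj*hl/(wj+wl) + wj*wl/(wj+wl)*s =
   (wl*hj + wj*hl + wj*wl*s) / (wj+wl) by field; rewrite lt0r_neq0.
rewrite ler_pdivrMr //.
rewrite -(ler_pM2r hP).
have -> : (s + (hl - t) / wl) * (wj * wl) = s*wj*wl + (hl - t)*wj.
  by field; rewrite lt0r_neq0.
have -> : (t - hj) / wj * (wj * wl) = (t - hj)*wl.
  by field; rewrite lt0r_neq0.
apply/idP/idP => H; lra.
Qed.

Lemma mx1 (R : realFieldType) (x y : R) : x <= Num.max x y.
Proof. by rewrite le_max lexx. Qed.
Lemma mx2 (R : realFieldType) (x y : R) : y <= Num.max x y.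
Proof. by rewrite le_max lexx orbT. Qed.
Lemma mn1 (R : realFieldType) (x y : R) : Num.min x y <= x.
Proof. by rewrite ge_min lexx. Qed.
Lemma mn2 (R : realFieldType) (x y : R) : Num.min x y <= y.
Proof. by rewrite ge_min lexx orbT. Qed.

Lemma box9_elim {R : realFieldType} {A B C D E F b : R} :
  Num.max (Num.max A B) C <= Num.min (Num.min D E) F - b ->
  [/\ A + b <= D, A + b <= E, A + b <= F,
     [/\ B + b <= D, B + b <= E & B + b <= F] &
     [/\ C + b <= D, C + b <= E & C + b <= F]].
Proof.
rewrite !ge_max !lerBrDr !le_min.
by move=> /andP[/andP[/andP[/andP[-> ->] ->] /andP[/andP[-> ->] ->]] /andP[/andP[-> ->] ->]].
Qed.

Lemma box9_intro {R : realFieldType} {A B C D E F b : R} :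
  A + b <= D -> A + b <= E -> A + b <= F ->
  B + b <= D -> B + b <= E -> B + b <= F ->
  C + b <= D -> C + b <= E -> C + b <= F ->
  Num.max (Num.max A B) C <= Num.min (Num.min D E) F - b.
Proof.
by move=> *; rewrite !ge_max !lerBrDr !le_min; apply/andP; split; [apply/andP; split|];
  rewrite ?andbT //= ?andbA ?andbT; repeat (apply/andP; split).
Qed.

Definition Lt {R : realFieldType} (p1 p2 w d h : nat -> R) (f1 f2 : R) (k : nat) (t : R) (j : nat) :=
  Num.max (Num.max ((h j - t) / w j + ocoord p1 p2 k j) (- d j + ocoord p1 p2 k j)) (sel2 f1 f2 k).
Definition Gt {R : realFieldType} (p1 p2 w d h : nat -> R) (g1 g2 : R) (i : nat) (t : R) (j : nat) :=
  Num.min (Num.min ((t - h j) / w j + ocoord p1 p2 i j) (d j + ocoord p1 p2 i j)) (sel2 g1 g2 i).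

Definition Qd {R : realFieldType} m (p1 p2 w d h : nat -> R) (f1 g1 f2 g2 a b t : R) :=
  forall i k, I12 i -> I12 k -> forall j l, (j < m)%N -> (l < m)%N ->
    Lt p1 p2 w d h f1 f2 k t l <= Gt p1 p2 w d h g1 g2 i t j - bstar a b i k.

Lemma theta_le (R : realFieldType) m (p1 p2 w d h : nat -> R) (f1 g1 f2 g2 a b t : R) :
  (0 < m)%N -> (forall j, (j < m)%N -> 0 < w j) ->
  Qd m p1 p2 w d h f1 g1 f2 g2 a b t -> theta m p1 p2 w d h f1 g1 f2 g2 a b <= t.
Proof.
move=> hm hw hQ; rewrite /theta.
apply/fmax_le => // j hj; apply/fmax_le => // l hl.
have wj := hw j hj; have wl := hw l hl.
rewrite !ge_max; apply/andP; split; [apply/andP; split|].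
- rewrite arith_pM; last by rewrite divr_gt0 ?mulr_gt0 ?addr_gt0.
  apply/max12_le => i k hi hk; rewrite -arith_pM; last by rewrite divr_gt0 ?mulr_gt0 ?addr_gt0.
  rewrite -arith1 //.
  have [H1 _ _ _ _] := box9_elim (hQ i k hi hk j l hj hl); lra.
- rewrite arith_pM //; apply/max12_le => i k hi hk.
  have [_ _ _ [H1 _ _] [H2 _ _]] := box9_elim (hQ i k hi hk j l hj hl).
  suff: Num.max (ocoord p1 p2 k l - d l) (sel2 f1 f2 k) <=
     (t - h j) / w j + ocoord p1 p2 i j - bstar a b i k by lra.
  rewrite ge_max; apply/andP; split; lra.
- rewrite arith_pM //; apply/max12_le => i k hi hk.
  have [_ H1 H2 _ _] := box9_elim (hQ i k hi hk j l hj hl).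
  have E : (h l - t) / w l = - ((t - h l) / w l) by rewrite -mulNr opprB.
  suff: (h l - t) / w l + ocoord p1 p2 k l + bstar a b i k <=
      Num.min (d j + ocoord p1 p2 i j) (sel2 g1 g2 i) by lra.
  rewrite le_min; apply/andP; split; lra.
Qed.

Lemma Q_theta (R : realFieldType) m (p1 p2 w d h : nat -> R) (f1 g1 f2 g2 a b : R) :
  (0 < m)%N -> (forall j, (j < m)%N -> 0 < w j) ->
  (forall i k, (i \in [:: 1%N; 2%N]) -> (k \in [:: 1%N; 2%N]) ->
     bstar a b i k
       + fmax m (fun l => Num.max (ocoord p1 p2 k l - d l) (sel2 f1 f2 k))
     <= fmin m (fun j => Num.min (ocoord p1 p2 i j + d j) (sel2 g1 g2 i))) ->
  Qd m p1 p2 w d h f1 g1 f2 g2 a b (theta m p1 p2 w d h f1 g1 f2 g2 a b).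
Proof.
move=> hm hw hcond; set th := theta _ _ _ _ _ _ _ _ _ _ _ _.
move=> i k hi hk j l hj hl.
have wj := hw j hj; have wl := hw l hl.
have T : theta m p1 p2 w d h f1 g1 f2 g2 a b <= th := le_refl th.
rewrite /theta /= in T.
move/(fmax_le _ _ _ _ hm): T => /(_ j hj) /(fmax_le _ _ _ _ hm) => /(_ l hl).
move=> T; rewrite !ge_max in T; case/andP: T => /andP[T1 T2] T3.
rewrite arith_pM in T1; last by rewrite divr_gt0 ?mulr_gt0 ?addr_gt0.
move/max12_le: T1 => /(_ i k hi hk) /=.
rewrite -arith_pM; last by rewrite divr_gt0 ?mulr_gt0 ?addr_gt0.
rewrite -arith1 // => T1.
rewrite arith_pM // in T2; move/max12_le: T2 => /(_ i k hi hk) /= T2.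
rewrite arith_pM // in T3; move/max12_le: T3 => /(_ i k hi hk) /= T3.
have E : (h l - th) / w l = - ((th - h l) / w l) by rewrite -mulNr opprB.
have HC := hcond i k hi hk.
have HC1 := fmax_ge _ m (fun l => Num.max (ocoord p1 p2 k l - d l) (sel2 f1 f2 k)) l hl.
have HC2 := fmin_le _ m (fun j => Num.min (ocoord p1 p2 i j + d j) (sel2 g1 g2 i)) j hj.
rewrite /= in HC1 HC2.
have M1 := @mx1 R (ocoord p1 p2 k l - d l) (sel2 f1 f2 k).
have M2 := @mx2 R (ocoord p1 p2 k l - d l) (sel2 f1 f2 k).
have N1 := @mn1 R (ocoord p1 p2 i j + d j) (sel2 g1 g2 i).
have N2 := @mn2 R (ocoord p1 p2 i j + d j) (sel2 g1 g2 i).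
have N3 := @mn1 R (d j + ocoord p1 p2 i j) (sel2 g1 g2 i).
have N4 := @mn2 R (d j + ocoord p1 p2 i j) (sel2 g1 g2 i).
rewrite /Lt /Gt. apply: box9_intro; lra.
Qed.

Ltac destr := repeat match goal with H : is_true (_ && _) |- _ => case/andP: H end.
Ltac splt := repeat (apply/andP; split).

Lemma absum {R : realFieldType} (u v r : R) :
  (`|u| + `|v| <= r) = [&& -r <= u + v, u + v <= r, -r <= v - u & v - u <= r].
Proof.
case: (lerP 0 u) => hu; [rewrite (ger0_norm hu) | rewrite (ltr0_norm hu)];
case: (lerP 0 v) => hv; [rewrite (ger0_norm hv) | rewrite (ltr0_norm hv) | rewrite (ger0_norm hv) | rewrite (ltr0_norm hv)];
apply/idP/idP => H; destr; intros; splt; lra.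
Qed.

Lemma perj (R : realFieldType) (p1 p2 w d h : nat -> R) (f1 g1 f2 g2 t x1 x2 : R) j :
  0 < w j ->
  [&& Lt p1 p2 w d h f1 f2 1 t j <= x1 + x2, x1 + x2 <= Gt p1 p2 w d h g1 g2 1 t j,
      Lt p1 p2 w d h f1 f2 2 t j <= x2 - x1 & x2 - x1 <= Gt p1 p2 w d h g1 g2 2 t j]
  = [&& rdist p1 p2 j x1 x2 <= d j, w j * rdist p1 p2 j x1 x2 + h j <= t,
        f1 <= x1 + x2, x1 + x2 <= g1, f2 <= x2 - x1 & x2 - x1 <= g2].
Proof.
move=> wj.
rewrite [w j * _ + h j]addrC arith_pM //.
have E : (h j - t) / w j = - ((t - h j) / w j) by rewrite -mulNr opprB.
rewrite /Lt /Gt E /rdist /ocoord /sel2 /=.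
set e := (t - h j) / w j.
rewrite !absum !ge_max !le_min.
apply/idP/idP => H; destr; intros; splt; lra.
Qed.

Lemma I12P (k : nat) : I12 k -> k = 1%N \/ k = 2%N.
Proof. by rewrite /I12 !inE => /orP[]/eqP->; [left|right]. Qed.

Definition Cond {R : realFieldType} m (p1 p2 w d h : nat -> R) (f1 g1 f2 g2 a b t u1 u2 : R) :=
  forall k, (k \in [:: 1%N; 2%N]) ->
    fmax m (fun j => Lt p1 p2 w d h f1 f2 k t j) <= sel2 u1 u2 k /\
    sel2 u1 u2 k <= min12 (fun i => fmin m (fun j => Gt p1 p2 w d h g1 g2 i t j - bstar a b i k)).

Lemma min12_le {R : realFieldType} (F : nat -> R) i : I12 i -> min12 F <= F i.
Proof. by move=> /I12P[]->; rewrite /min12 ?mn1 ?mn2. Qed.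

Lemma Cond_Q (R : realFieldType) m (p1 p2 w d h : nat -> R) (f1 g1 f2 g2 a b t u1 u2 : R) :
  Cond m p1 p2 w d h f1 g1 f2 g2 a b t u1 u2 -> Qd m p1 p2 w d h f1 g1 f2 g2 a b t.
Proof.
move=> hC i k hi hk j l hj hl.
have [C1 C2] := hC k hk.
have A1 := fmax_ge _ m (fun j => Lt p1 p2 w d h f1 f2 k t j) l hl.
have A2 := min12_le (fun i => fmin m (fun j => Gt p1 p2 w d h g1 g2 i t j - bstar a b i k)) i hi.
have A3 := fmin_le _ m (fun j => Gt p1 p2 w d h g1 g2 i t j - bstar a b i k) j hj.
rewrite /= in A1 A2 A3.
exact: le_trans (le_trans A1 C1) (le_trans (le_trans C2 A2) A3).
Qed.

Lemma Q_Cond (R : realFieldType) m (p1 p2 w d h : nat -> R) (f1 g1 f2 g2 a b t : R) :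
  (0 < m)%N -> Qd m p1 p2 w d h f1 g1 f2 g2 a b t ->
  Cond m p1 p2 w d h f1 g1 f2 g2 a b t
     (fmax m (fun j => Lt p1 p2 w d h f1 f2 1 t j))
     (fmax m (fun j => Lt p1 p2 w d h f1 f2 2 t j)).
Proof.
move=> hm hQ k hk.
have hk' := hk; move: hk' => /I12P[] ->; split=> //=; rewrite /min12 le_min;
  apply/andP; split; apply/fmin_ge => // j hj; apply/fmax_le => // l hl;
  apply: hQ => //; rewrite /I12 !inE eqxx ?orbT //.
Qed.

Lemma two_half {R : realFieldType} (x y : R) : (x + y) / 2 + (x - y) / 2 = x.
Proof. by field. Qed.

Lemma Fwd (R : realFieldType) m (p1 p2 w d h : nat -> R) (f1 g1 f2 g2 a b t x1 x2 : R) :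
  (0 < m)%N -> (forall j, (j < m)%N -> 0 < w j) ->
  feasible m p1 p2 d f1 g1 f2 g2 a b x1 x2 -> objective m p1 p2 w h x1 x2 <= t ->
  Cond m p1 p2 w d h f1 g1 f2 g2 a b t (x1 + x2) (x2 - x1) /\
  x1 = (yvec a b (x1 + x2) (x2 - x1) 1 - yvec a b (x1 + x2) (x2 - x1) 2) / 2 /\
  x2 = (yvec a b (x1 + x2) (x2 - x1) 1 + yvec a b (x1 + x2) (x2 - x1) 2) / 2.
Proof.
move=> hm hw [hd' /andP[F1 F2] /andP[F3 F4] /andP[A1 A2]] /(fmax_le _ _ _ _ hm) ho.
have HJ : forall j, (j < m)%N ->
  [&& Lt p1 p2 w d h f1 f2 1 t j <= x1 + x2, x1 + x2 <= Gt p1 p2 w d h g1 g2 1 t j,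
      Lt p1 p2 w d h f1 f2 2 t j <= x2 - x1 & x2 - x1 <= Gt p1 p2 w d h g1 g2 2 t j].
  move=> j hj; rewrite perj ?hw //; have := hd' j hj; have := ho j hj => /= *; splt => //; lra.
have Ey1 : yvec a b (x1 + x2) (x2 - x1) 1 = x1 + x2.
  by rewrite /yvec /= add0r max_l //; lra.
have Ey2 : yvec a b (x1 + x2) (x2 - x1) 2 = x2 - x1.
  by rewrite /yvec /= add0r max_r //; lra.
rewrite Ey1 Ey2; split; last by split; field.
move=> k /I12P[]->; rewrite /sel2 /=; split.
- by apply/fmax_le => // j hj; have /and4P[] := HJ j hj.
- rewrite /min12 le_min; apply/andP; split; apply/fmin_ge => // j hj;
  have /and4P[H1 H2 H3 H4] := HJ j hj => /=; lra.
- by apply/fmax_le => // j hj; have /and4P[] := HJ j hj.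
- rewrite /min12 le_min; apply/andP; split; apply/fmin_ge => // j hj;
  have /and4P[H1 H2 H3 H4] := HJ j hj => /=; lra.
Qed.

Lemma Back (R : realFieldType) m (p1 p2 w d h : nat -> R) (f1 g1 f2 g2 a b t u1 u2 : R) :
  (0 < m)%N -> (forall j, (j < m)%N -> 0 < w j) -> a <= b ->
  Cond m p1 p2 w d h f1 g1 f2 g2 a b t u1 u2 ->
  feasible m p1 p2 d f1 g1 f2 g2 a b
    ((yvec a b u1 u2 1 - yvec a b u1 u2 2) / 2) ((yvec a b u1 u2 1 + yvec a b u1 u2 2) / 2) /\
  objective m p1 p2 w h
    ((yvec a b u1 u2 1 - yvec a b u1 u2 2) / 2) ((yvec a b u1 u2 1 + yvec a b u1 u2 2) / 2) <= t.
Proof.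
move=> hm hw hab hC.
have [C1a C1b] := hC 1%N (isT : I12 1).
have [C2a C2b] := hC 2%N (isT : I12 2).
rewrite /sel2 /= in C1a C1b C2a C2b.
rewrite /min12 le_min in C1b; rewrite /min12 le_min in C2b.
case/andP: C1b => C1b C1c; case/andP: C2b => C2b C2c.
set y1 := yvec a b u1 u2 1; set y2 := yvec a b u1 u2 2.
have Ey1 : y1 = Num.max u1 (2 * a + u2) by rewrite /y1 /yvec /= add0r.
have Ey2 : y2 = Num.max (- (2 * b) + u1) u2 by rewrite /y2 /yvec /= add0r.
set x1 := (y1 - y2) / 2; set x2 := (y1 + y2) / 2.
have S1 : x1 + x2 = y1 by rewrite /x1 /x2; field.
have S2 : x2 - x1 = y2 by rewrite /x1 /x2; field.
have HY1 : u1 <= y1 by rewrite Ey1 mx1.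
have HY2 : 2 * a + u2 <= y1 by rewrite Ey1 mx2.
have HY3 : - (2 * b) + u1 <= y2 by rewrite Ey2 mx1.
have HY4 : u2 <= y2 by rewrite Ey2 mx2.
have HJ : forall j, (j < m)%N ->
  [&& Lt p1 p2 w d h f1 f2 1 t j <= x1 + x2, x1 + x2 <= Gt p1 p2 w d h g1 g2 1 t j,
      Lt p1 p2 w d h f1 f2 2 t j <= x2 - x1 & x2 - x1 <= Gt p1 p2 w d h g1 g2 2 t j].
  move=> j hj; rewrite S1 S2.
  have L1 := le_trans (fmax_ge _ m (fun j => Lt p1 p2 w d h f1 f2 1 t j) j hj) C1a.
  have L2 := le_trans (fmax_ge _ m (fun j => Lt p1 p2 w d h f1 f2 2 t j) j hj) C2a.
  have G1 := le_trans C1b (fmin_le _ m (fun j => Gt p1 p2 w d h g1 g2 1 t j - bstar a b 1 1) j hj).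
  have G2 := le_trans C1c (fmin_le _ m (fun j => Gt p1 p2 w d h g1 g2 2 t j - bstar a b 2 1) j hj).
  have G3 := le_trans C2b (fmin_le _ m (fun j => Gt p1 p2 w d h g1 g2 1 t j - bstar a b 1 2) j hj).
  have G4 := le_trans C2c (fmin_le _ m (fun j => Gt p1 p2 w d h g1 g2 2 t j - bstar a b 2 2) j hj).
  rewrite /= in L1 L2 G1 G2 G3 G4.
  splt.
  - exact: le_trans L1 HY1.
  - rewrite Ey1 ge_max; apply/andP; split; lra.
  - exact: le_trans L2 HY4.
  - rewrite Ey2 ge_max; apply/andP; split; lra.
have HJ' : forall j, (j < m)%N ->
  [&& rdist p1 p2 j x1 x2 <= d j, w j * rdist p1 p2 j x1 x2 + h j <= t,
        f1 <= x1 + x2, x1 + x2 <= g1, f2 <= x2 - x1 & x2 - x1 <= g2].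
  by move=> j hj; rewrite -perj ?hw // HJ.
have Y1 : y2 <= y1 - 2 * a by rewrite Ey2 ge_max; apply/andP; split; lra.
have Y2 : y1 <= y2 + 2 * b by rewrite Ey1 ge_max; apply/andP; split; lra.
have /and3P[_ _ /and4P[F1 F2 F3 F4]] := HJ' 0%N hm.
split; last by apply/fmax_le => // j hj; have /and3P[_ ->] := HJ' j hj.
split.
- by move=> j hj; have /andP[-> _] := HJ' j hj.
- splt; lra.
- splt; lra.
- splt; lra.
Qed.

Lemma eq_le_refl_aux {R : realFieldType} (x y : R) : x = y -> x <= y.
Proof. by move->. Qed.

Theorem corollary3 (R : realFieldType) (m : nat) (hm : (1 <= m)%N)
  (p1 p2 w d h : nat -> R) (f1 g1 f2 g2 a b : R)
  (hw : forall j, (j < m)%N -> 0 < w j)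
  (hd : forall j, (j < m)%N -> 0 < d j)
  (hfg1 : f1 <= g1) (hfg2 : f2 <= g2) (hab : a <= b)
  (hcond : forall i k, (i \in [:: 1%N; 2%N]) -> (k \in [:: 1%N; 2%N]) ->
     bstar a b i k
       + fmax m (fun l => Num.max (ocoord p1 p2 k l - d l) (sel2 f1 f2 k))
     <= fmin m (fun j => Num.min (ocoord p1 p2 i j + d j) (sel2 g1 g2 i))) :
  let th := theta m p1 p2 w d h f1 g1 f2 g2 a b in
  (* the minimum exists and equals th *)
  (exists x1 x2 : R, feasible m p1 p2 d f1 g1 f2 g2 a b x1 x2 /\
                     objective m p1 p2 w h x1 x2 = th) /\
  (forall x1 x2 : R, feasible m p1 p2 d f1 g1 f2 g2 a b x1 x2 ->
                     th <= objective m p1 p2 w h x1 x2) /\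
  (* the solution set is exactly the parametrized family *)
  (forall x1 x2 : R,
     (feasible m p1 p2 d f1 g1 f2 g2 a b x1 x2 /\
      objective m p1 p2 w h x1 x2 = th) <->
     (exists u1 u2 : R,
        (forall k, (k \in [:: 1%N; 2%N]) ->
           fmax m (fun j => Num.max (Num.max ((h j - th) / w j + ocoord p1 p2 k j)
                                             (- d j + ocoord p1 p2 k j))
                                    (sel2 f1 f2 k))
           <= sel2 u1 u2 k /\
           sel2 u1 u2 k
           <= min12 (fun i => fmin m (fun j =>
                 Num.min (Num.min ((th - h j) / w j + ocoord p1 p2 i j)
                                  (d j + ocoord p1 p2 i j))
                         (sel2 g1 g2 i)
                 - bstar a b i k))) /\
        x1 = (yvec a b u1 u2 1%N - yvec a b u1 u2 2%N) / 2 /\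
        x2 = (yvec a b u1 u2 1%N + yvec a b u1 u2 2%N) / 2)).
Proof.
move=> th.
have QT := @Q_theta R m p1 p2 w d h f1 g1 f2 g2 a b hm hw hcond.
have LB : forall x1 x2, feasible m p1 p2 d f1 g1 f2 g2 a b x1 x2 ->
    th <= objective m p1 p2 w h x1 x2.
  move=> x1 x2 hf.
  have [hC _] := @Fwd R m p1 p2 w d h f1 g1 f2 g2 a b
     (objective m p1 p2 w h x1 x2) x1 x2 hm hw hf (le_refl _).
  apply: (@theta_le R m p1 p2 w d h f1 g1 f2 g2 a b _ hm hw).
  apply: Cond_Q; exact: hC.
have CT := @Q_Cond R m p1 p2 w d h f1 g1 f2 g2 a b th hm QT.
split.
  have [hf ho] := @Back R m p1 p2 w d h f1 g1 f2 g2 a b th _ _ hm hw hab CT.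
  eexists; eexists; split; first exact: hf.
  by apply/eqP; rewrite eq_le ho LB.
split; first exact: LB.
move=> x1 x2; split.
  move=> [hf ho].
  have [hC [e1 e2]] := @Fwd R m p1 p2 w d h f1 g1 f2 g2 a b th x1 x2 hm hw hf
     (eq_le_refl_aux _ _ ho).
  by exists (x1 + x2), (x2 - x1); split.
move=> [u1 [u2 [hC [e1 e2]]]].
have [hf ho] := @Back R m p1 p2 w d h f1 g1 f2 g2 a b th u1 u2 hm hw hab hC.
rewrite e1 e2; split=> //.
by apply/eqP; rewrite eq_le ho LB.
Qed.
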